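(* Let $L, e_i, e_j, e_h, e_w, e_v$ be mutually independent random variables, where $L, e_i, e_j, e_h, e_w$ are mean-zero Gaussian. For constants $a_i, a_j, a_h, a_w$ define $X_m = a_m L + e_m$ for $m \in \{i,j,h,w\}$. Let $f$ be a measurable function such that $V_i = f(X_i, e_v)$ has finite second moment. Then the tetrad constraints hold among $V_i, X_j, X_h, X_w$ for every partition into pairs: $$\mathrm{Cov}(V_i,X_j)\,\mathrm{Cov}(X_h,X_w) = \mathrm{Cov}(V_i,X_h)\,\mathrm{Cov}(X_j,X_w) = \mathrm{Cov}(V_i,X_w)\,\mathrm{Cov}(X_j,X_h).$$ In particular this holds when $X_i$ is standard Gaussian and $V_i$ is the binary variable with $V_i = 1$ if $X_i \ge S_i$ and $V_i = 0$ otherwise, for a constant $S_i$.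
   Context: This describes a pure 1-factor measurement model with a single latent common cause $L$ of the linear Gaussian indicators $X_i, X_j, X_h, X_w$, in which the indicator $X_i$ is replaced by a (possibly non-Gaussian, e.g. binary) variable $V_i$ that is a function of $X_i$ and an independent noise term $e_v$. *)

(* Defs.v *)
From HB Require Import structures.
From mathcomp Require Import all_boot all_order all_algebra.
From mathcomp Require Import all_classical all_reals all_analysis.
Set Implicit Arguments. Unset Strict Implicit. Unset Printing Implicit Defensive.
Import Order.TTheory GRing.Theory Num.Theory.
Local Open Scope classical_set_scope.
Local Open Scope ring_scope.

(* Mutual independence of a finite family of real random variables:
   each is measurable, and for every choice of Borel sets A_k the joint
   probability factorises (taking A_k = setT recovers all subfamilies). *)
Definition mutually_independent_rvs {d} {T : measurableType d} {R : realType}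
    (P : probability T R) (n : nat) (X : 'I_n -> T -> R) : Prop :=
  (forall k, measurable_fun setT (X k)) /\
  forall A : 'I_n -> set R, (forall k, measurable (A k)) ->
    P (\bigcap_(k in [set: 'I_n]) (X k @^-1` A k)) =
    (\prod_(k < n) P (X k @^-1` A k))%E.

Definition is_gaussian {d} {T : measurableType d} {R : realType}
    (P : probability T R) (X : T -> R) (m s : R) : Prop :=
  0 < s /\ forall A : set R, measurable A -> P (X @^-1` A) = normal_prob m s A.

Definition is_centered_gaussian {d} {T : measurableType d} {R : realType}
    (P : probability T R) (X : T -> R) : Prop :=
  exists s : R, is_gaussian P X 0 s.

Definition tetrad_constraints {d} {T : measurableType d} {R : realType}
    (P : probability T R) (V Xj Xh Xw : T -> R) : Prop :=
  (covariance P V Xj * covariance P Xh Xw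
     = covariance P V Xh * covariance P Xj Xw)%E /\
  (covariance P V Xh * covariance P Xj Xw
     = covariance P V Xw * covariance P Xj Xh)%E.

(* Main.v *)
Require Import Defs.
From HB Require Import structures.
From mathcomp Require Import all_boot all_order all_algebra.
From mathcomp Require Import all_classical all_reals all_analysis.
From mathcomp Require Import measurable_realfun.
From mathcomp Require Import ring lra.
Set Implicit Arguments. Unset Strict Implicit. Unset Printing Implicit Defensive.
Import Order.TTheory GRing.Theory Num.Theory.
Local Open Scope classical_set_scope.
Local Open Scope ring_scope.
Section indepE.
Local Open Scope ereal_scope.
Context d (T : measurableType d) (R : realType) (P : probability T R).
Context dU (U : measurableType dU).
Variables (phi : {mfun T >-> U}) (e : {mfun T >-> R}) (g : U -> R).
Hypothesis mg : measurable_fun setT g.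
Hypothesis HI : forall C B, measurable C -> measurable B ->
  P (phi @^-1` C `&` e @^-1` B) = P (phi @^-1` C) * P (e @^-1` B).
Hypothesis ig : P.-integrable setT (EFin \o (g \o phi)).
Hypothesis ie : P.-integrable setT (EFin \o e).

Definition Psi_ : T -> U * R := fun w => (phi w, e w).
Let mPsi : measurable_fun setT Psi_.
Proof. exact: measurable_fun_pair. Qed.
HB.instance Definition _ := isMeasurableFun.Build _ _ _ _ Psi_ mPsi.

Let mu1 := distribution P phi.
Let mu2 := distribution P e.
Let muP := distribution P Psi_.

Let prodE A : measurable A -> (mu1 \x mu2) A = muP A.
Proof.
move=> mA; apply: product_measure_unique mA => C B mC mB.
by rewrite /muP /distribution /pushforward /= -HI.
Qed.

Let h (z : U * R) : \bar R := (g z.1 * z.2)%:E.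
Let mh : measurable_fun [set: (U * R)%type] h.
Proof.
apply/measurable_EFinP; apply: measurable_funM.
  exact: measurableT_comp.
exact: measurable_snd.
Qed.

Let transfer_int dV (W : measurableType dV) (X : {mfun T >-> W}) (f : W -> \bar R) :
  measurable_fun setT f -> P.-integrable setT (f \o X) ->
  (distribution P X).-integrable setT f.
Proof.
move=> mf intf; apply: integrable_pushforward => //.
Qed.

Let i1 : mu1.-integrable setT (EFin \o g).
Proof. apply: transfer_int => //; exact/measurable_EFinP. Qed.
Let i2 : mu2.-integrable setT EFin.
Proof. by apply: transfer_int. Qed.

Let habs : \int[mu1 \x mu2]_z `|h z| < +oo.
Proof.
rewrite fubini_tonelli1; last by move=> z.
  2: exact: measurableT_comp.
rewrite /fubini_F.
have -> : (fun x => \int[mu2]_y `|h (x, y)|) =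
   (fun x => `|g x|%:E * \int[mu2]_y `|y%:E|).
  apply/funext => x; rewrite -ge0_integralZl //=; last first.
    exact: measurableT_comp.
  by apply: eq_integral => y _; rewrite /h /= normrM EFinM.
rewrite ge0_integralZr //=; last 2 first.
  - apply/measurable_EFinP; apply: measurableT_comp => //.
  - exact: integral_ge0.
apply: lte_mul_pinfty.
- exact: integral_ge0.
- move/integrableP : i1 => [_ /=]; rewrite ge0_fin_numE ?integral_ge0//.
- by move/integrableP : i2 => [_].
Qed.

Let hPsiabs : \int[P]_w `|(h \o Psi_) w| < +oo.
Proof.
rewrite -(@ge0_integral_distribution _ _ _ _ _ P [the {mfun T >-> _} of Psi_] (fun z => `|h z|)) //; last exact: measurableT_comp.
rewrite (eq_measure_integral (mu1 \x mu2)) //.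
by move=> A mA _; exact: (esym (prodE mA)).
Qed.

Lemma indep_integrable : P.-integrable setT (h \o Psi_).
Proof.
apply/integrableP; split => //.
exact: measurableT_comp.
Qed.

Lemma indep_E : \int[P]_w ((g (phi w) * e w)%:E) =
  (\int[P]_w (g (phi w))%:E) * (\int[P]_w (e w)%:E).
Proof.
have hint : (mu1 \x mu2).-integrable setT h.
  by apply/integrableP; split.
transitivity (\int[P]_w (h \o Psi_) w); first by [].
rewrite -(@integral_distribution _ _ _ _ _ P [the {mfun T >-> _} of Psi_] h) //; last exact: indep_integrable.
rewrite (eq_measure_integral (mu1 \x mu2)) //; last first.
  move=> A mA _; exact: (esym (prodE mA)).
rewrite -integral12_prod_meas1 // /fubini_F.
have cfin : \int[mu2]_y (y%:E) \is a fin_num.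
  by apply: integrable_fin_num.
have -> : (fun x => \int[mu2]_y h (x, y)) =
   (fun x => (g x)%:E * (fine (\int[mu2]_y (y%:E)))%:E).
  apply/funext => x; rewrite fineK // -integralZl //.
rewrite integralZr // fineK //.
rewrite (@integral_distribution _ _ _ _ _ P phi (EFin \o g)) //; last exact/measurable_EFinP.
by rewrite (@integral_distribution _ _ _ _ _ P e EFin).
Qed.

Lemma indep_cov0 : covariance P (g \o phi) e = 0.
Proof.
have i1' : (g \o phi) \in Lfun P 1 by apply/Lfun1_integrable.
have i2' : (e : T -> R) \in Lfun P 1 by apply/Lfun1_integrable.
have i12 : ((g \o phi) * e)%R \in Lfun P 1.
  by apply/Lfun1_integrable; exact: indep_integrable.
rewrite covarianceE //.
have -> : 'E_P[(g \o phi) * e] = 'E_P[g \o phi] * 'E_P[e].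
  rewrite !expectation.unlock; exact: indep_E.
rewrite subee // fin_numM // expectation_fin_num //.
Qed.

End indepE.
Section gauss.
Context {R : realType}.

Lemma yexpNy_le1 (y : R) : 0 <= y -> y * expR (- y) <= 1.
Proof.
move=> y0; rewrite expRN ler_pdivrMr ?expR_gt0 // mul1r.
by apply: le_trans (expR_ge1Dx y); rewrite lerDr.
Qed.

Lemma sq_pdf_bound (s x : R) : 0 < s ->
  x ^+ 2 * normal_pdf 0 s x <=
  (normal_peak s * (s ^+ 2 *+ 4) / normal_peak (s * Num.sqrt 2)) *
    normal_pdf 0 (s * Num.sqrt 2) x.
Proof.
move=> s0.
have s'0 : s * Num.sqrt 2 != 0 by rewrite mulf_neq0 ?gt_eqF ?sqrtr_gt0.
have pk' := normal_peak_gt0 s'0.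
rewrite /normal_pdf (negbTE s'0) (gt_eqF s0) /normal_fun !subr0.
set y := x ^+ 2 / (s ^+ 2 *+ 4).
have y0 : 0 <= y by rewrite divr_ge0 ?sqr_ge0 // mulrn_wge0 // sqr_ge0.
have s2 : (s * Num.sqrt 2) ^+ 2 *+ 2 = s ^+ 2 *+ 4.
  rewrite exprMn sqr_sqrtr //; ring.
have e1 : - x ^+ 2 / ((s * Num.sqrt 2) ^+ 2 *+ 2) = - y by rewrite s2 mulNr.
have e2 : - x ^+ 2 / (s ^+ 2 *+ 2) = - y + - y.
  by rewrite /y; field; rewrite gt_eqF.
rewrite e1 e2 expRD.
have hx : x ^+ 2 * expR (- y) <= s ^+ 2 *+ 4.
  have -> : x ^+ 2 = (s ^+ 2 *+ 4) * y.
    rewrite /y mulrC -mulrA mulVf ?mulr1 //.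
    by rewrite mulrn_eq0 /= sqrf_eq0 gt_eqF.
  rewrite -mulrA ler_piMr ?mulrn_wge0 ?sqr_ge0 //.
  exact: yexpNy_le1.
have -> : normal_peak s * (s ^+ 2 *+ 4) / normal_peak (s * Num.sqrt 2) *
  (normal_peak (s * Num.sqrt 2) * expR (- y)) = normal_peak s * ((s ^+ 2 *+ 4) * expR (- y)).
  by field; rewrite gt_eqF.
rewrite mulrA [x ^+ 2 * _]mulrC -mulrA.
apply: ler_wpM2l; first exact: normal_peak_ge0.
rewrite mulrA; apply: ler_wpM2r; first exact: expR_ge0.
exact: hx.
Qed.

Local Open Scope ereal_scope.
Lemma normal_sq_fin (s : R) : (0 < s)%R -> \int[normal_prob 0 s]_x ((x ^+ 2)%:E) < +oo.
Proof.
move=> s0.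
have numu := @normal_prob_dominates R 0 s.
rewrite -(Radon_Nikodym_SigmaFinite.change_of_variables numu) //; last 2 first.
  by move=> x; rewrite lee_fin sqr_ge0.
  by apply/measurable_EFinP; exact: measurable_funX.
set RN := Radon_Nikodym_SigmaFinite.f _ _.
have ae : ae_eq lebesgue_measure setT RN (fun x => (normal_pdf 0 s x)%:E).
  apply: integral_ae_eq => //.
  - exact: Radon_Nikodym_SigmaFinite.f_integrable.
  - by apply/measurable_EFinP; exact: measurable_normal_pdf.
  - move=> E _ mE; rewrite -Radon_Nikodym_SigmaFinite.f_integral //.
have -> : \int[lebesgue_measure]_x ((x ^+ 2)%:E * RN x) =
    \int[lebesgue_measure]_x ((x ^+ 2)%:E * (normal_pdf 0 s x)%:E).
  apply: ae_eq_integral => //.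
- apply: emeasurable_funM; first by apply/measurable_EFinP; exact: measurable_funX.
  apply: measurable_int; exact: Radon_Nikodym_SigmaFinite.f_integrable.
- apply: emeasurable_funM; first by apply/measurable_EFinP; exact: measurable_funX.
  by apply/measurable_EFinP; exact: measurable_normal_pdf.
  exact: ae_eqe_mul2l.
set K := (normal_peak s * (s ^+ 2 *+ 4) / normal_peak (s * Num.sqrt 2))%R.
apply: (@le_lt_trans _ _ (\int[lebesgue_measure]_x (K%:E * (normal_pdf 0 (s * Num.sqrt 2) x)%:E))).
  apply: ge0_le_integral => //.
  - by move=> x _; rewrite -EFinM lee_fin mulr_ge0 ?sqr_ge0 ?normal_pdf_ge0.
  - apply: emeasurable_funM; first by apply/measurable_EFinP; exact: measurable_funX.
    by apply/measurable_EFinP; exact: measurable_normal_pdf.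
  - by apply/measurable_EFinP; apply: measurable_funM => //; exact: measurable_normal_pdf.
  - by move=> x _; rewrite -EFinM lee_fin; exact: sq_pdf_bound.
rewrite integralZl //; last exact: integrable_normal_pdf.
by rewrite integral_normal_pdf mule1 ltry.
Qed.
End gauss.

Definition mkmf d1 d2 (T1 : measurableType d1) (T2 : measurableType d2)
  (f : T1 -> T2) (mf : measurable_fun setT f) : {mfun T1 >-> T2} :=
  MeasurableFun.Pack (MeasurableFun.Class (isMeasurableFun.Build _ _ _ _ f mf)).
Arguments mkmf {d1 d2 T1 T2 f}.

Section L2.
Local Open Scope ereal_scope.
Context d (T : measurableType d) (R : realType) (P : probability T R).

Lemma L2_of_sq (X : T -> R) : measurable_fun setT X ->
  \int[P]_w ((X w ^+ 2)%:E) < +oo -> X \in Lfun P 2%:E.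
Proof.
move=> mX fin; rewrite inE; apply/andP; split; first by rewrite inE.
rewrite inE /= /finite_norm unlock /Lnorm.
apply: poweR_lty.
under eq_integral => x _ do rewrite /comp abse_EFin poweR_EFin powR_mulrn ?normr_ge0 // real_normK ?num_real //.
exact: fin.
Qed.

Lemma gauss_L2 (X : T -> R) s : measurable_fun setT X -> is_gaussian P X 0 s ->
  X \in Lfun P 2%:E.
Proof.
move=> mX [s0 HX]; apply: L2_of_sq => //.
pose Xm := @mkmf _ _ T (measurableTypeR R) X mX.
have mf : measurable_fun [set: measurableTypeR R] (fun x : measurableTypeR R => ((x : R) ^+ 2)%:E).
  by apply/measurable_EFinP; exact: measurable_funX.
have := @ge0_integral_distribution _ _ _ _ _ P Xm (fun x => ((x : R) ^+ 2)%:E) mf.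
rewrite /= => <- //; last by move=> y; rewrite lee_fin sqr_ge0.
have -> : \int[distribution P Xm]_y ((y : R) ^+ 2)%:E = \int[normal_prob 0 s]_y (y ^+ 2)%:E.
  apply: eq_measure_integral => A mA _. change (P (X @^-1` A) = normal_prob 0 s A). exact: HX.
exact: normal_sq_fin.
Qed.
End L2.


Section pfm.
Local Open Scope ereal_scope.
Context d1 d2 (T1 : measurableType d1) (T2 : measurableType d2) (R : realType).
Variables (m : {measure set T1 -> \bar R}) (f : {mfun T1 >-> T2}).
Definition pfm (A : set T2) := m (f @^-1` A).
Let pfm0 : pfm set0 = 0.
Proof. by rewrite /pfm preimage_set0 measure0. Qed.
Let pfm_ge0 A : 0 <= pfm A.
Proof. by apply: measure_ge0. Qed.
Let pfm_sigma_additive : semi_sigma_additive pfm.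
Proof.
move=> F mF tF mUF; rewrite /pfm preimage_bigcup.
apply: measure_semi_sigma_additive.
- by move=> n; rewrite -[X in measurable X]setTI; exact: measurable_funP.
- apply/trivIsetP => /= i j _ _ ij; rewrite -preimage_setI.
  by move/trivIsetP : tF => /(_ _ _ _ _ ij) ->//; rewrite preimage_set0.
- by rewrite -preimage_bigcup -[X in measurable X]setTI; exact: measurable_funP.
Qed.
HB.instance Definition _ := isMeasure.Build _ _ _ pfm pfm0 pfm_ge0 pfm_sigma_additive.
End pfm.
Arguments pfm {d1 d2 T1 T2 R}.

Section HIext.
Local Open Scope ereal_scope.
Context d (T : measurableType d) (R : realType) (P : probability T R).
Context d1 d2 (U1 : measurableType d1) (U2 : measurableType d2).

Lemma HIext (f1 : T -> U1) (f2 : T -> U2) (W : set T) (c : R) :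
  measurable_fun setT f1 -> measurable_fun setT f2 -> measurable W -> (0 <= c)%R ->
  (forall A D, measurable A -> measurable D ->
     P (f1 @^-1` A `&` f2 @^-1` D `&` W) = P (f1 @^-1` A `&` f2 @^-1` D) * c%:E) ->
  forall C, measurable C ->
    P ((fun w => (f1 w, f2 w)) @^-1` C `&` W) = P ((fun w => (f1 w, f2 w)) @^-1` C) * c%:E.
Proof.
move=> mf1 mf2 mW c0 H C mC.
have mpsi : measurable_fun setT (fun w => (f1 w, f2 w)) by exact: measurable_fun_pair.
pose psi := mkmf mpsi.
pose m1 := pfm (mrestr P mW) psi.
pose m2 := mscale (NngNum c0) (pfm P psi).
have := @measure_unique _ R _ [set A `*` B | A in measurable & B in measurable] (fun=> setT) _ _ _ _ m1 m2 _ _ C mC.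
rewrite /m1 /m2 /pfm /mscale /mrestr /= muleC; apply.
- by rewrite measurable_prod_measurableType.
- move=> _ _ [A1 mA1 [B1 mB1 <-]] [A2 mA2 [B2 mB2 <-]].
  rewrite -setXI; exists (A1 `&` A2); first exact: measurableI.
  by exists (B1 `&` B2) => //; exact: measurableI.
- by move=> _; exists setT => //; exists setT => //; rewrite setXTT.
- by rewrite bigcup_const.
- move=> _ [A mA [D mD <-]].
  by rewrite /m1 /m2 /pfm /mscale /mrestr /= H // muleC.
- move=> _; rewrite /m1 /pfm /mrestr /=.
  apply: (le_lt_trans (probability_le1 _ _)); last exact: ltry.
  by apply: measurableI => //; rewrite -[X in measurable X]setTI; exact: (mpsi).
Qed.
End HIext.
Section mi6.
Local Open Scope ereal_scope.
Context d (T : measurableType d) (R : realType) (P : probability T R).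
Lemma mi6 (X0 X1 X2 X3 X4 X5 : T -> R) :
  mutually_independent_rvs P (fun k : 'I_6 => nth X0 [:: X0; X1; X2; X3; X4; X5] k) ->
  forall A0 A1 A2 A3 A4 A5 : set R, measurable A0 -> measurable A1 ->
  measurable A2 -> measurable A3 -> measurable A4 -> measurable A5 ->
  P (X0 @^-1` A0 `&` X1 @^-1` A1 `&` X2 @^-1` A2 `&` X3 @^-1` A3 `&` X4 @^-1` A4 `&` X5 @^-1` A5) =
  P (X0 @^-1` A0) * P (X1 @^-1` A1) * P (X2 @^-1` A2) * P (X3 @^-1` A3) * P (X4 @^-1` A4) * P (X5 @^-1` A5).
Proof.
move=> [_ H] A0 A1 A2 A3 A4 A5 m0 m1 m2 m3 m4 m5.
have := H (fun k : 'I_6 => nth setT [:: A0; A1; A2; A3; A4; A5] k).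
rewrite !big_ord_recr big_ord0 /= mul1e => <-.
  congr (P _); apply/seteqP; split => w /=.
    move=> [[[[[h0 h1] h2] h3] h4] h5].
    move=> [[|[|[|[|[|[|k]]]]]] Hk] _ //=.
  move=> Hw.
  have h := fun k Hk => Hw (@Ordinal 6 k Hk) I.
  by do !split; [exact: (h 0%N)|exact: (h 1%N)|exact: (h 2%N)|exact: (h 3%N)|exact: (h 4%N)|exact: (h 5%N)].
by move=> [[|[|[|[|[|[|k]]]]]] Hk].
Qed.
End mi6.

Section triple.
Local Open Scope ereal_scope.
Context d (T : measurableType d) (R : realType) (P : probability T R).

Lemma HI_triple (L ei ev e : T -> R) :
  measurable_fun setT L -> measurable_fun setT ei -> measurable_fun setT ev ->
  measurable_fun setT e ->
  (forall A0 A1 A2 A3, measurable A0 -> measurable A1 -> measurable A2 -> measurable A3 ->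
    P (ei @^-1` A1 `&` ev @^-1` A2 `&` (L @^-1` A0 `&` e @^-1` A3)) =
    P (ei @^-1` A1) * P (ev @^-1` A2) * (P (L @^-1` A0) * P (e @^-1` A3))) ->
  forall C B, measurable C -> measurable B ->
  P ((fun w => (L w, (ei w, ev w))) @^-1` C `&` e @^-1` B) =
  P ((fun w => (L w, (ei w, ev w))) @^-1` C) * P (e @^-1` B).
Proof.
move=> mL mi mv me H4 C B mC mB.
have mpre (f : T -> R) A : measurable_fun setT f -> measurable A -> measurable (f @^-1` A).
  by move=> mf mA; rewrite -[X in measurable X]setTI; exact: mf.
have fin (A : set T) : measurable A -> P A \is a fin_num.
  by move=> mA; exact: fin_num_measure.
have Pge0 (A : set T) : 0 <= P A by [].
have stepa A0 A3 : measurable A0 -> measurable A3 -> forall D, measurable D ->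
    P ((fun w => (ei w, ev w)) @^-1` D `&` (L @^-1` A0 `&` e @^-1` A3)) =
    P ((fun w => (ei w, ev w)) @^-1` D) * (P (L @^-1` A0) * P (e @^-1` A3)).
  move=> mA0 mA3 D mD.
  have c0 : (0 <= fine (P (L @^-1` A0) * P (e @^-1` A3)))%R.
    by rewrite fine_ge0 // mule_ge0.
  have cE : (fine (P (L @^-1` A0) * P (e @^-1` A3)))%:E = P (L @^-1` A0) * P (e @^-1` A3).
    by rewrite fineK //; apply: fin_numM; apply: fin; exact: mpre.
  rewrite -cE; apply: (HIext mi mv _ c0) => //.
    by apply: measurableI; apply: mpre.
  move=> A1 A2 mA1 mA2; rewrite cE H4 //.
  have := H4 setT A1 A2 setT measurableT mA1 mA2 measurableT.
  rewrite !preimage_setT !setIT !probability_setT mule1 => ->.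
  by rewrite mule1.
have mpsi : measurable_fun setT (fun w => (ei w, ev w)) by exact: measurable_fun_pair.
have c0 : (0 <= fine (P (e @^-1` B)))%R by rewrite fine_ge0.
have cE : (fine (P (e @^-1` B)))%:E = P (e @^-1` B) by rewrite fineK //; apply: fin; exact: mpre.
rewrite -cE; apply: (HIext mL mpsi _ c0) => //; first exact: mpre.
move=> A D mA mD; rewrite cE.
have -> : L @^-1` A `&` (fun w => (ei w, ev w)) @^-1` D `&` e @^-1` B =
  (fun w => (ei w, ev w)) @^-1` D `&` (L @^-1` A `&` e @^-1` B).
  by apply/seteqP; split => w /= ; tauto.
rewrite stepa //.
have -> : L @^-1` A `&` (fun w => (ei w, ev w)) @^-1` D =
  (fun w => (ei w, ev w)) @^-1` D `&` (L @^-1` A `&` e @^-1` setT).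
  by rewrite preimage_setT setIT setIC.
by rewrite stepa // preimage_setT probability_setT mule1 muleA.
Qed.
End triple.

Section covh.
Local Open Scope ereal_scope.
Context d (T : measurableType d) (R : realType) (P : probability T R).

Let P1 : P setT \is a fin_num.
Proof. exact: fin_num_measure. Qed.

Lemma L2_L1 (X : T -> R) : X \in Lfun P 2%:E -> X \in Lfun P 1.
Proof. by move=> h; apply: Lfun_subset12. Qed.

Lemma L2_mul (X Y : T -> R) : X \in Lfun P 2%:E -> Y \in Lfun P 2%:E -> (X * Y)%R \in Lfun P 1.
Proof. by move=> hX hY; apply: Lfun2_mul_Lfun1. Qed.

Lemma L2_scale (X : T -> R) (a : R) : X \in Lfun P 2%:E -> (a \o* X)%R \in Lfun P 2%:E.
Proof. by move=> hX; apply: Lfun_scale => //; rewrite ler1n. Qed.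

Lemma L2_lin (X Y : T -> R) (a : R) : X \in Lfun P 2%:E -> Y \in Lfun P 2%:E ->
  (fun w => a * X w + Y w)%R \in Lfun P 2%:E.
Proof.
move=> hX hY.
have -> : (fun w => a * X w + Y w)%R = ((a \o* X) + Y)%R.
  by apply/funext => w /=; rewrite mulrC.
apply: rpredD; [by rewrite lee1n | move=> ?; exact (L2_scale a hX) | move=> ?; exact hY].
Qed.

Lemma covV (V L e : T -> R) (a : R) : V \in Lfun P 2%:E -> L \in Lfun P 2%:E ->
  e \in Lfun P 2%:E -> covariance P V e = 0 ->
  covariance P V (fun w => a * L w + e w)%R = a%:E * covariance P V L.
Proof.
move=> hV hL he H.
have -> : (fun w => a * L w + e w)%R = ((a \o* L) \+ e)%R.
  by apply/funext => w /=; rewrite mulrC.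
rewrite covarianceDr //; last exact: L2_scale.
rewrite covarianceZr; [|exact: L2_L1|exact: L2_L1|exact: L2_mul].
by rewrite H adde0.
Qed.

Lemma covX (L e1 e2 : T -> R) (a1 a2 : R) : L \in Lfun P 2%:E ->
  e1 \in Lfun P 2%:E -> e2 \in Lfun P 2%:E ->
  covariance P L e1 = 0 -> covariance P L e2 = 0 -> covariance P e1 e2 = 0 ->
  covariance P (fun w => a1 * L w + e1 w)%R (fun w => a2 * L w + e2 w)%R =
  (a1 * a2)%:E * covariance P L L.
Proof.
move=> hL h1 h2 c1 c2 c12.
have -> : (fun w => a1 * L w + e1 w)%R = ((a1 \o* L) \+ e1)%R.
  by apply/funext => w /=; rewrite mulrC.
rewrite covarianceDl //; last 2 first.
  exact: L2_scale.
  exact: L2_lin.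
have hL' : (a1 \o* L)%R \in Lfun P 2%:E by exact: L2_scale.
rewrite covV //; last first.
  rewrite covarianceZl; [|exact: L2_L1|exact: L2_L1|exact: L2_mul].
  by rewrite c2 mule0.
rewrite covV //.
rewrite covarianceZl; [|exact: L2_L1|exact: L2_L1|exact: L2_mul].
rewrite (covarianceC P e1 L) c1 mule0 adde0.
by rewrite muleA -EFinM mulrC.
Qed.
End covh.

Section core.
Local Open Scope ereal_scope.
Context d (T : measurableType d) (R : realType) (P : probability T R).

Lemma cov0_gen dU (U : measurableType dU) (phi : T -> U) (e : T -> R) (g : U -> R) :
  measurable_fun setT phi -> measurable_fun setT e -> measurable_fun setT g ->
  (forall C B, measurable C -> measurable B ->
    P (phi @^-1` C `&` e @^-1` B) = P (phi @^-1` C) * P (e @^-1` B)) ->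
  (fun w => g (phi w)) \in Lfun P 1 -> e \in Lfun P 1 ->
  covariance P (fun w => g (phi w)) e = 0.
Proof.
move=> mphi me mg HI ig ie.
have := @indep_cov0 _ _ _ P _ _ (mkmf mphi) (mkmf me) g mg HI.
move=> /(_ _ _); apply.
- exact/Lfun1_integrable.
- exact/Lfun1_integrable.
Qed.

Lemma reorder4 (a b c e : \bar R) : a * b * c * e = b * e * (a * c).
Proof.
rewrite [a * b]muleC -!muleA; congr (b * _).
by rewrite [c * e]muleC muleCA.
Qed.

Lemma core (L ei ej eh ew ev : T -> R) (ai aj ah aw : R) (f : R * R -> R) :
  mutually_independent_rvs P
    (fun k : 'I_6 => nth L [:: L; ei; ej; eh; ew; ev] k) ->
  is_centered_gaussian P L ->
  is_centered_gaussian P ej -> is_centered_gaussian P eh ->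
  is_centered_gaussian P ew ->
  measurable_fun setT f ->
  (fun w => f (ai * L w + ei w, ev w))%R \in Lfun P 2%:E ->
  tetrad_constraints P (fun w => f (ai * L w + ei w, ev w))%R
    (fun w => aj * L w + ej w)%R (fun w => ah * L w + eh w)%R
    (fun w => aw * L w + ew w)%R.
Proof.
move=> MI [sL gL] [sj gj] [sh gh] [sw gw] mf V2.
have [mK _] := MI.
have mL : measurable_fun setT L := mK (@Ordinal 6 0 erefl).
have mi : measurable_fun setT ei := mK (@Ordinal 6 1 erefl).
have mj : measurable_fun setT ej := mK (@Ordinal 6 2 erefl).
have mh : measurable_fun setT eh := mK (@Ordinal 6 3 erefl).
have mw : measurable_fun setT ew := mK (@Ordinal 6 4 erefl).
have mv : measurable_fun setT ev := mK (@Ordinal 6 5 erefl).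
have L2L := gauss_L2 mL gL.
have L2j := gauss_L2 mj gj.
have L2h := gauss_L2 mh gh.
have L2w := gauss_L2 mw gw.
have mi6' := mi6 MI.
set Vi := (fun w => f (ai * L w + ei w, ev w))%R.
have Vi_L1 : Vi \in Lfun P 1 := L2_L1 V2.
have L1L := L2_L1 L2L.
have L1j := L2_L1 L2j.
have L1h := L2_L1 L2h.
have L1w := L2_L1 L2w.
have Hpair (X Y : T -> R) (mX : measurable_fun setT X) (mY : measurable_fun setT Y) :
  X \in Lfun P 1 -> Y \in Lfun P 1 ->
  (forall C B, measurable C -> measurable B ->
    P (X @^-1` C `&` Y @^-1` B) = P (X @^-1` C) * P (Y @^-1` B)) ->
  covariance P X Y = 0.
  move=> hX hY HI.
  exact: (@cov0_gen _ _ X Y (fun x : R => x) mX mY (@measurable_id _ _ _) HI hX hY).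
have cLj : covariance P L ej = 0.
  apply: Hpair => // C B mC mB.
  have := mi6' C setT B setT setT setT mC measurableT mB measurableT measurableT measurableT.
  by rewrite ?preimage_setT ?setIT ?setTI ?probability_setT ?mule1 ?mul1e.
have cLh : covariance P L eh = 0.
  apply: Hpair => // C B mC mB.
  have := mi6' C setT setT B setT setT mC measurableT measurableT mB measurableT measurableT.
  by rewrite ?preimage_setT ?setIT ?setTI ?probability_setT ?mule1 ?mul1e.
have cLw : covariance P L ew = 0.
  apply: Hpair => // C B mC mB.
  have := mi6' C setT setT setT B setT mC measurableT measurableT measurableT mB measurableT.
  by rewrite ?preimage_setT ?setIT ?setTI ?probability_setT ?mule1 ?mul1e.
have cjh : covariance P ej eh = 0.
  apply: Hpair => // C B mC mB.
  have := mi6' setT setT C B setT setT measurableT measurableT mC mB measurableT measurableT.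
  by rewrite ?preimage_setT ?setIT ?setTI ?probability_setT ?mule1 ?mul1e.
have cjw : covariance P ej ew = 0.
  apply: Hpair => // C B mC mB.
  have := mi6' setT setT C setT B setT measurableT measurableT mC measurableT mB measurableT.
  by rewrite ?preimage_setT ?setIT ?setTI ?probability_setT ?mule1 ?mul1e.
have chw : covariance P eh ew = 0.
  apply: Hpair => // C B mC mB.
  have := mi6' setT setT setT C B setT measurableT measurableT measurableT mC mB measurableT.
  by rewrite ?preimage_setT ?setIT ?setTI ?probability_setT ?mule1 ?mul1e.
have mphi : measurable_fun setT (fun w => (L w, (ei w, ev w))).
  by apply: measurable_fun_pair => //; exact: measurable_fun_pair.
have mg : measurable_fun setT (fun p : R * (R * R) => f (ai * p.1 + p.2.1, p.2.2)%R).
  apply: measurableT_comp => //; apply: measurable_fun_pair.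
    apply: measurable_funD.
      by apply: measurable_funM => //; exact: measurable_fst.
    exact: measurableT_comp measurable_fst measurable_snd.
  exact: measurableT_comp measurable_snd measurable_snd.
have Htrip (e : T -> R) : measurable_fun setT e -> e \in Lfun P 1 ->
  (forall A0 A1 A2 A3, measurable A0 -> measurable A1 -> measurable A2 -> measurable A3 ->
    P (ei @^-1` A1 `&` ev @^-1` A2 `&` (L @^-1` A0 `&` e @^-1` A3)) =
    P (ei @^-1` A1) * P (ev @^-1` A2) * (P (L @^-1` A0) * P (e @^-1` A3))) ->
  covariance P Vi e = 0.
  move=> me he H4.
  exact: (@cov0_gen _ _ _ e _ mphi me mg (HI_triple mL mi mv me H4) Vi_L1 he).
have cVj : covariance P Vi ej = 0.
  apply: Htrip => // A0 A1 A2 A3 m0 m1 m2 m3.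
  have := mi6' A0 A1 A3 setT setT A2 m0 m1 m3 measurableT measurableT m2.
  rewrite ?preimage_setT ?setIT ?setTI ?probability_setT ?mule1 ?mul1e.
  have -> : ei @^-1` A1 `&` ev @^-1` A2 `&` (L @^-1` A0 `&` ej @^-1` A3) =
    L @^-1` A0 `&` ei @^-1` A1 `&` ej @^-1` A3 `&` ev @^-1` A2.
    by apply/seteqP; split => w /=; tauto.
  by move=> ->; exact: reorder4.
have cVh : covariance P Vi eh = 0.
  apply: Htrip => // A0 A1 A2 A3 m0 m1 m2 m3.
  have := mi6' A0 A1 setT A3 setT A2 m0 m1 measurableT m3 measurableT m2.
  rewrite ?preimage_setT ?setIT ?setTI ?probability_setT ?mule1 ?mul1e.
  have -> : ei @^-1` A1 `&` ev @^-1` A2 `&` (L @^-1` A0 `&` eh @^-1` A3) =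
    L @^-1` A0 `&` ei @^-1` A1 `&` eh @^-1` A3 `&` ev @^-1` A2.
    by apply/seteqP; split => w /=; tauto.
  by move=> ->; exact: reorder4.
have cVw : covariance P Vi ew = 0.
  apply: Htrip => // A0 A1 A2 A3 m0 m1 m2 m3.
  have := mi6' A0 A1 setT setT A3 A2 m0 m1 measurableT measurableT m3 m2.
  rewrite ?preimage_setT ?setIT ?setTI ?probability_setT ?mule1 ?mul1e.
  have -> : ei @^-1` A1 `&` ev @^-1` A2 `&` (L @^-1` A0 `&` ew @^-1` A3) =
    L @^-1` A0 `&` ei @^-1` A1 `&` ew @^-1` A3 `&` ev @^-1` A2.
    by apply/seteqP; split => w /=; tauto.
  by move=> ->; exact: reorder4.
rewrite /tetrad_constraints.
rewrite (@covV _ _ _ P Vi L ej aj) // (@covV _ _ _ P Vi L eh ah) // (@covV _ _ _ P Vi L ew aw) //.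
rewrite (@covX _ _ _ P L eh ew ah aw) // (@covX _ _ _ P L ej ew aj aw) // (@covX _ _ _ P L ej eh aj ah) //.
have cfin : covariance P Vi L \is a fin_num.
  by apply: covariance_fin_num => //; exact: L2_mul.
have vfin : covariance P L L \is a fin_num.
  by apply: covariance_fin_num => //; exact: L2_mul.
rewrite -(fineK cfin) -(fineK vfin) -!EFinM.
by split; congr EFin; ring.
Qed.
End core.

Theorem mainTheorem1 (d : measure_display) (T : measurableType d) (R : realType)
    (P : probability T R) (L ei ej eh ew ev : T -> R) (ai aj ah aw : R)
    (f : R * R -> R) :
  mutually_independent_rvs P
    (fun k : 'I_6 => nth L [:: L; ei; ej; eh; ew; ev] k) ->
  is_centered_gaussian P L -> is_centered_gaussian P ei ->
  is_centered_gaussian P ej -> is_centered_gaussian P eh ->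
  is_centered_gaussian P ew ->
  measurable_fun setT f ->
  let Xi := fun w => ai * L w + ei w in
  let Xj := fun w => aj * L w + ej w in
  let Xh := fun w => ah * L w + eh w in
  let Xw := fun w => aw * L w + ew w in
  let Vi := fun w => f (Xi w, ev w) in
  (P.-integrable setT (fun w => ((Vi w) ^+ 2)%:E) ->
     tetrad_constraints P Vi Xj Xh Xw) /\
  (forall Si : R, is_gaussian P Xi 0 1 ->
     tetrad_constraints P (fun w => if Si <= Xi w then 1 else 0) Xj Xh Xw).
Proof.
move=> MI gL gi gj gh gw mf Xi Xj Xh Xw Vi.
have [mK _] := MI.
have mL : measurable_fun setT L := mK (@Ordinal 6 0 erefl).
have mi : measurable_fun setT ei := mK (@Ordinal 6 1 erefl).
have mv : measurable_fun setT ev := mK (@Ordinal 6 5 erefl).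
have mXi : measurable_fun setT Xi.
  by apply: measurable_funD => //; exact: measurable_funM.
split.
  move=> iV; apply: core => //.
  apply: L2_of_sq.
    exact: (measurableT_comp mf (measurable_fun_pair mXi mv)).
  move/integrableP : iV => [_].
  by under eq_integral => x _ do rewrite gee0_abs ?lee_fin ?sqr_ge0 //.
move=> Si _.
pose f' := fun p : R * R => if Si <= p.1 then (1 : R) else 0.
have mf' : measurable_fun setT f'.
  apply: measurable_fun_ifT => //.
  by apply: measurable_fun_ler => //; exact: measurable_fst.
apply: (@core _ _ _ P L ei ej eh ew ev ai aj ah aw f') => //.
apply: L2_of_sq.
  exact: (measurableT_comp mf' (measurable_fun_pair mXi mv)).
apply: (@le_lt_trans _ _ (\int[P]_w (cst 1%R w)%:E)%E).
  apply: ge0_le_integral => //.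
  - by move=> x _; rewrite lee_fin sqr_ge0.
  - apply/measurable_EFinP; apply: measurable_funX.
    exact: (measurableT_comp mf' (measurable_fun_pair mXi mv)).
  - by apply/measurable_EFinP.
  - move=> x _; rewrite lee_fin /f' /=; case: ifP => _.
    + by rewrite expr1n.
    + by rewrite expr0n.
rewrite (@eq_integral _ _ _ P setT (cst 1%E)) //.
rewrite integral_cst // mul1e.
apply: (le_lt_trans (probability_le1 _ _)) => //.
exact: ltry.
Qed.
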